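(* Let $S$ be a $\tau$-uniform sampling of $[n]$ ($\tau\ge1$) with $c_1$-uniform support ($c_1\ge1$), and let $\mathcal G=\mathrm{supp}(S)$. Then $f(x)=\frac1{|\mathcal G|}\sum_{C\in\mathcal G}f_C(x)$ for all $x$, and $$L\le\frac1{|\mathcal G|}\sum_{C\in\mathcal G}L_C\le L^{\mathcal G}_{\max}\le L_{\max}.$$ The last inequality holds without assuming $\tau$-uniformity.
   Context: $f=\frac1n\sum_{i=1}^nf_i$, $f_i:\mathbb{R}^d\to\mathbb{R}$ smooth; for nonempty $C\subseteq[n]$, $f_C=\frac1{|C|}\sum_{i\in C}f_i$ and $L_C$ is the smoothness constant (Lipschitz constant of $\nabla f_C$); $L_i=L_{\{i\}}$, $L=L_{[n]}$, $L_{\max}=\max_iL_i$. A sampling is a random subset $S$ of $[n]$ with $p_C=\Pr(S=C)$, $p_i=\Pr(i\in S)$, $\mathrm{supp}(S)=\{C:p_C>0\}$; $\tau$-uniform means $p_i$ equal for all $i$ and $|S|=\tau$ a.s.; $c_1$-uniform support means $|\{C\in\mathrm{supp}(S):i\in C\}|=c_1$ for all $i$. $L^{\mathcal G}_{\max}=\max_i\frac1{c_1}\sum_{C\in\mathcal G:\,i\in C}L_C$. *)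

(* Defs.v *)
From HB Require Import structures.
From mathcomp Require Import all_boot all_order all_algebra.
From mathcomp Require Import all_classical all_reals all_analysis.
Set Implicit Arguments. Unset Strict Implicit. Unset Printing Implicit Defensive.
Import Order.TTheory GRing.Theory Num.Theory.
Import numFieldNormedType.Exports.
Local Open Scope ring_scope.

Section Defs.
Variable R : realType.

Definition enorm (d : nat) (v : 'rV[R]_d) : R :=
  Num.sqrt (\sum_(j < d) (v ord0 j) ^+ 2).

Definition grad (d : nat) (g : 'rV[R]_d -> R) (x : 'rV[R]_d) : 'rV[R]_d :=
  \row_(j < d) ('D_(delta_mx ord0 j) g x).

Definition smooth_fun (d : nat) (g : 'rV[R]_d -> R) : Prop :=
  (forall x, differentiable g x) /\
  exists L : R, forall x y, enorm (grad g x - grad g y) <= L * enorm (x - y).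

Definition Lsmooth (d : nat) (g : 'rV[R]_d -> R) : R :=
  inf [set L : R | (0 <= L) /\
        forall x y, enorm (grad g x - grad g y) <= L * enorm (x - y)]%classic.

Definition fC (n d : nat) (f : 'I_n -> 'rV[R]_d -> R) (C : {set 'I_n})
  : 'rV[R]_d -> R :=
  fun x => (#|C|%:R)^-1 * \sum_(i in C) f i x.

Definition favg (n d : nat) (f : 'I_n -> 'rV[R]_d -> R) : 'rV[R]_d -> R :=
  fun x => (n%:R)^-1 * \sum_(i < n) f i x.

Definition LC (n d : nat) (f : 'I_n -> 'rV[R]_d -> R) (C : {set 'I_n}) : R :=
  Lsmooth (fC f C).

Definition Lall (n d : nat) (f : 'I_n -> 'rV[R]_d -> R) : R := Lsmooth (favg f).

Definition Lmax (n d : nat) (f : 'I_n -> 'rV[R]_d -> R) : R :=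
  \big[Num.max/0]_(i < n) LC f [set i].

(* a sampling: probability mass function p_C = Pr(S = C) on subsets of [n] *)
Definition sampling (n : nat) (p : {set 'I_n} -> R) : Prop :=
  (forall C, 0 <= p C) /\ \sum_(C : {set 'I_n}) p C = 1.

Definition prob_in (n : nat) (p : {set 'I_n} -> R) (i : 'I_n) : R :=
  \sum_(C : {set 'I_n} | i \in C) p C.

Definition supp (n : nat) (p : {set 'I_n} -> R) : {set {set 'I_n}} :=
  [set C : {set 'I_n} | 0 < p C].

Definition tau_uniform (n : nat) (p : {set 'I_n} -> R) (tau : nat) : Prop :=
  (forall i j, prob_in p i = prob_in p j) /\
  (forall C, 0 < p C -> #|C| = tau).

Definition c1_uniform_support (n : nat) (p : {set 'I_n} -> R) (c1 : nat) : Prop :=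
  forall i : 'I_n, #|[set C in supp p | i \in C]| = c1.

Definition LGmax (n d : nat) (f : 'I_n -> 'rV[R]_d -> R)
  (G : {set {set 'I_n}}) (c1 : nat) : R :=
  \big[Num.max/0]_(i < n) ((c1%:R)^-1 * \sum_(C in G | i \in C) LC f C).

End Defs.

(* Main.v *)
Require Import Defs.
From HB Require Import structures.
From mathcomp Require Import all_boot all_order all_algebra.
From mathcomp Require Import all_classical all_reals all_analysis.
From mathcomp Require Import ring lra.
Import Order.TTheory GRing.Theory Num.Theory.
Local Open Scope ring_scope.

Section Helpers.
Variable R : realType.
Variable d : nat.
Implicit Types u v : 'rV[R]_d.

Lemma ssq_ge0 v : 0 <= \sum_(j < d) (v ord0 j) ^+ 2.
Proof. by apply: sumr_ge0 => j _; apply: sqr_ge0. Qed.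

Lemma enorm_ge0 v : 0 <= enorm v.
Proof. exact: sqrtr_ge0. Qed.

Lemma enorm0 : enorm (0 : 'rV[R]_d) = 0.
Proof. by rewrite /enorm big1 ?sqrtr0 // => j _; rewrite mxE expr0n. Qed.

Lemma enormZ (a : R) v : enorm (a *: v) = `|a| * enorm v.
Proof.
rewrite /enorm (eq_bigr (fun j => a ^+ 2 * (v ord0 j) ^+ 2)); last first.
  by move=> j _; rewrite mxE exprMn.
by rewrite -mulr_sumr sqrtrM ?sqr_ge0 // sqrtr_sqr.
Qed.

Lemma ssq0 v : \sum_(j < d) (v ord0 j) ^+ 2 = 0 -> forall j, v ord0 j = 0.
Proof.
move=> h j; have := (psumr_eq0P (fun j _ => sqr_ge0 (v ord0 j)) h) j isT.
by move/eqP; rewrite sqrf_eq0 => /eqP.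
Qed.

Lemma CS u v : \sum_(j < d) u ord0 j * v ord0 j <= enorm u * enorm v.
Proof.
set X := \sum_(j < d) _. set a := enorm u. set b := enorm v.
have ha : a ^+ 2 = \sum_(j < d) (u ord0 j) ^+ 2 by rewrite sqr_sqrtr ?ssq_ge0.
have hb : b ^+ 2 = \sum_(j < d) (v ord0 j) ^+ 2 by rewrite sqr_sqrtr ?ssq_ge0.
have a0 : 0 <= a := enorm_ge0 u. have b0 : 0 <= b := enorm_ge0 v.
have key : 0 <= b ^+ 2 * a ^+ 2 + (- (2 * a * b)) * X + a ^+ 2 * b ^+ 2.
  rewrite {1}ha {2}hb !mulr_sumr -!big_split /=.
  apply: sumr_ge0 => j _.
  have -> : b ^+ 2 * u ord0 j ^+ 2 + - (2 * a * b) * (u ord0 j * v ord0 j) +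
     a ^+ 2 * v ord0 j ^+ 2 = (b * u ord0 j - a * v ord0 j) ^+ 2 by ring.
  exact: sqr_ge0.
have [ab0|abpos] := eqVneq (a * b) 0.
  move/eqP: ab0; rewrite mulf_eq0 => /orP[] /eqP z.
  - have hu : forall j, u ord0 j = 0 by apply: ssq0; rewrite -ha z expr0n.
    by rewrite /X big1 ?z ?mul0r // => j _; rewrite hu mul0r.
  - have hv : forall j, v ord0 j = 0 by apply: ssq0; rewrite -hb z expr0n.
    by rewrite /X big1 ?z ?mulr0 // => j _; rewrite hv mulr0.
have abp : 0 < a * b by rewrite lt_def abpos mulr_ge0.
nra.
Qed.

Lemma enormD u v : enorm (u + v) <= enorm u + enorm v.
Proof.
have e : \sum_(j < d) ((u + v) ord0 j) ^+ 2 =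
   \sum_(j < d) (u ord0 j) ^+ 2 + 2 * \sum_(j < d) (u ord0 j * v ord0 j)
   + \sum_(j < d) (v ord0 j) ^+ 2.
  rewrite mulr_sumr -!big_split /=; apply: eq_bigr => j _; rewrite mxE; ring.
rewrite /enorm e -[X in _ <= X]ger0_norm ?addr_ge0 ?sqrtr_ge0 //.
rewrite -sqrtr_sqr; apply: ler_wsqrtr.
have := CS u v; rewrite /enorm => h.
rewrite sqrrD !sqr_sqrtr ?ssq_ge0 //.
set A := \sum_(j < d) _. set B := \sum_(j < d) _. set C := \sum_(j < d) _.
rewrite -/A -/B -/C in h *. lra.
Qed.

Lemma enorm_sum (I : Type) (r : seq I) (P : pred I) (w : I -> R) (vv : I -> 'rV[R]_d) :
  (forall k, P k -> 0 <= w k) ->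
  enorm (\sum_(k <- r | P k) w k *: vv k) <= \sum_(k <- r | P k) w k * enorm (vv k).
Proof.
move=> hw; elim: r => [|k r IH]; first by rewrite !big_nil enorm0.
rewrite !big_cons; case: ifP => Pk //.
apply: le_trans (enormD _ _) _; rewrite enormZ ger0_norm ?hw //.
by apply: lerD.
Qed.


Definition Sset (g : 'rV[R]_d -> R) := [set L : R | (0 <= L) /\
        forall x y, enorm (grad g x - grad g y) <= L * enorm (x - y)]%classic.

Lemma Lsmooth_in (g : 'rV[R]_d -> R) : smooth_fun g -> Sset g (Lsmooth g).
Proof.
move=> [_ [L hL]].
have ne : Sset g (Num.max L 0).
  split; first by rewrite le_max lexx orbT.
  move=> x y; apply: le_trans (hL x y) _; apply: ler_wpM2r; first exact: enorm_ge0.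
  by rewrite le_max lexx.
have lb : has_lbound (Sset g) by exists 0 => z [].
have hi : has_inf (Sset g) by split; [exists (Num.max L 0) | ].
split; first by apply: lb_le_inf; [exists (Num.max L 0) | move=> z []].
move=> x y; apply/ler_addgt0Pr => e e0.
set E := enorm (x - y).
have E0 : 0 <= E := enorm_ge0 _.
have E1 : 0 < E + 1 by rewrite ltr_wpDl.
have eps0 : 0 < e / (E + 1) by rewrite divr_gt0.
have [L' [_ hL'] lt] := inf_adherent eps0 hi.
have h1 : e / (E + 1) * (E + 1) = e by rewrite divfK // gt_eqF.
have := hL' x y; rewrite -/E => h2.
rewrite /Lsmooth -/(Sset g) in lt *.
set i := inf (Sset g) in lt *. set eps := e / (E + 1) in eps0 h1 lt.
nra.
Qed.

Lemma comb_diff (I : Type) (P : pred I) (w : I -> R) (g : I -> 'rV[R]_d -> R) :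
  (forall k, P k -> forall x, differentiable (g k) x) ->
  forall r : seq I,
  (forall x, differentiable (fun x => \sum_(k <- r | P k) w k * g k x) x) /\
  (forall x, grad (fun x => \sum_(k <- r | P k) w k * g k x) x =
             \sum_(k <- r | P k) w k *: grad (g k) x).
Proof.
move=> hg; elim => [|k r [IHd IHg]].
  have -> : (fun x => \sum_(k <- [::] | P k) w k * g k x) = cst 0.
    by apply/funext => x; rewrite big_nil.
  split; first by move=> x; exact: differentiable_cst.
  by move=> x; apply/rowP => j; rewrite big_nil !mxE derive_cst.
case Pk : (P k); last first.
  have -> : (fun x => \sum_(k0 <- k :: r | P k0) w k0 * g k0 x) =
            (fun x => \sum_(k0 <- r | P k0) w k0 * g k0 x).
    by apply/funext => x; rewrite big_cons Pk.
  by split => // x; rewrite big_cons Pk IHg.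
have -> : (fun x => \sum_(k0 <- k :: r | P k0) w k0 * g k0 x) =
          (w k *: g k) + (fun x => \sum_(k0 <- r | P k0) w k0 * g k0 x).
  by apply/funext => x; rewrite big_cons Pk.
split.
  move=> x; apply: differentiableD => //; apply: differentiableZ; exact: hg.
move=> x; rewrite big_cons Pk -IHg; apply/rowP => j; rewrite !mxE.
rewrite deriveD; last 2 first.
- by apply: diff_derivable; apply: differentiableZ; exact: hg.
- exact: diff_derivable.
by rewrite (deriveZ (f := g k)) //; apply: diff_derivable; exact: hg.
Qed.


Lemma comb_smooth (I : finType) (P : pred I) (w : I -> R) (g : I -> 'rV[R]_d -> R) :
  (forall k, P k -> 0 <= w k) -> (forall k, P k -> smooth_fun (g k)) ->
  smooth_fun (fun x => \sum_(k | P k) w k * g k x) /\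
  Lsmooth (fun x => \sum_(k | P k) w k * g k x) <= \sum_(k | P k) w k * Lsmooth (g k).
Proof.
move=> hw hs.
have [hd hgr] := @comb_diff I P w g (fun k Pk => (hs k Pk).1) (index_enum I).
set h := (fun x => _).
have inS : Sset h (\sum_(k | P k) w k * Lsmooth (g k)).
  split.
    apply: sumr_ge0 => k Pk; apply: mulr_ge0; first exact: hw.
    by have [] := @Lsmooth_in (g k) (hs k Pk).
  move=> x y; rewrite !hgr -sumrB.
  under eq_bigr => k _ do rewrite -scalerBr.
  apply: le_trans (@enorm_sum I (index_enum I) P w (fun k => grad (g k) x - grad (g k) y) hw) _.
  rewrite mulr_suml; apply: ler_sum => k Pk; rewrite -mulrA.
  apply: ler_wpM2l; first exact: hw.
  by have [_ ] := @Lsmooth_in (g k) (hs k Pk); apply.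
split; first by split => //; exists (\sum_(k | P k) w k * Lsmooth (g k)); case: inS.
apply: ge_inf => //; by exists 0 => z [].
Qed.

End Helpers.
Section Main.
Variable R : realType.
Variables n d : nat.
Variable f : 'I_n -> 'rV[R]_d -> R.
Hypothesis hf : forall i, smooth_fun (f i).

Lemma exch (G : {set {set 'I_n}}) (F : {set 'I_n} -> 'I_n -> R) :
  \sum_(C in G) \sum_(i in C) F C i = \sum_i \sum_(C in G | i \in C) F C i.
Proof.
transitivity (\sum_(C : {set 'I_n}) \sum_(i : 'I_n)
   (if (C \in G) && (i \in C) then F C i else 0)).
  rewrite big_mkcond; apply: eq_bigr => C _.
  case CG: (C \in G) => /=; first by rewrite big_mkcond.
  by rewrite big1.
by rewrite exchange_big; apply: eq_bigr => i _; rewrite [RHS]big_mkcond.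
Qed.

Lemma fC_eq C : fC f C = fun x => \sum_(k in C) (#|C|%:R)^-1 * f k x.
Proof. by apply/funext => x; rewrite /fC mulr_sumr. Qed.

Lemma fC_smooth C : smooth_fun (fC f C) /\
   LC f C <= \sum_(k in C) (#|C|%:R)^-1 * Lsmooth (f k).
Proof.
rewrite /LC fC_eq; apply: comb_smooth => k _ //.
Qed.

Lemma bmax_ge (I : eqType) (r : seq I) (F : I -> R) (x0 : R) j : j \in r ->
  F j <= \big[Num.max/x0]_(i <- r) F i.
Proof.
elim: r => // a r IH; rewrite in_cons big_cons => /orP[/eqP->|/IH h].
  by rewrite le_max lexx.
by rewrite le_max h orbT.
Qed.

Lemma bmax_ge0 (I : Type) (r : seq I) (F : I -> R) (x0 : R) :
  x0 <= \big[Num.max/x0]_(i <- r) F i.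
Proof. by elim: r => [|a r IH]; rewrite ?big_nil ?big_cons ?lexx // le_max IH orbT. Qed.

Lemma bmax_le (I : Type) (r : seq I) (F : I -> R) (x0 x : R) :
  x0 <= x -> (forall i, F i <= x) -> \big[Num.max/x0]_(i <- r) F i <= x.
Proof. by move=> h0 h; elim: r => [|a r IH]; rewrite ?big_nil ?big_cons // ge_max h IH. Qed.

Lemma LCsing i : LC f [set i] = Lsmooth (f i).
Proof.
rewrite /LC; congr Lsmooth; apply/funext => x.
by rewrite /fC cards1 invr1 mul1r big_set1.
Qed.

Lemma Lmax_ge i : Lsmooth (f i) <= Lmax f.
Proof. rewrite -LCsing /Lmax. have := @bmax_ge _ (index_enum _) (fun j : 'I_n => LC f [set j]) 0 i (mem_index_enum _). exact. Qed.

Lemma Lmax_ge0 : 0 <= Lmax f.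
Proof. exact: bmax_ge0. Qed.

Lemma LC_le (C : {set 'I_n}) (i : 'I_n) : i \in C -> LC f C <= Lmax f.
Proof.
move=> iC; apply: le_trans (fC_smooth C).2 _.
apply: le_trans (_ : \sum_(k in C) (#|C|%:R)^-1 * Lmax f <= _).
  apply: ler_sum => k _; apply: ler_wpM2l; first by rewrite invr_ge0 ler0n.
  exact: Lmax_ge.
rewrite sumr_const -[_ *+ #|C|]mulr_natr mulrAC mulVf ?mul1r // pnatr_eq0 -lt0n.
by apply/card_gt0P; exists i.
Qed.

End Main.
Arguments Lmax_ge0 {R n d} f.
Arguments LC_le {R n d f} hf {C i}.
Arguments fC_smooth {R n d f} hf C.

Theorem theorem4p17 (R : realType) (n d : nat) (f : 'I_n -> 'rV[R]_d -> R)
  (hf : forall i, smooth_fun (f i))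
  (p : {set 'I_n} -> R) (hp : sampling p) (c1 : nat) (hc1 : (1 <= c1)%N)
  (hsupp : c1_uniform_support p c1) :
  LGmax f (supp p) c1 <= Lmax f /\
  (forall tau : nat, (1 <= tau)%N -> tau_uniform p tau ->
     (forall x, favg f x = (#|supp p|%:R)^-1 * \sum_(C in supp p) fC f C x) /\
     Lall f <= (#|supp p|%:R)^-1 * \sum_(C in supp p) LC f C /\
     (#|supp p|%:R)^-1 * \sum_(C in supp p) LC f C <= LGmax f (supp p) c1).
Proof.
set G := supp p.
have cnt : forall i (a : R), \sum_(C in G | i \in C) a = a *+ c1.
  move=> i a; rewrite -(hsupp i) -sumr_const; apply: eq_bigl => C; rewrite !inE.
  by [].
have c10 : c1%:R != 0 :> R by rewrite pnatr_eq0 -lt0n.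
have Lmax0 := Lmax_ge0 f.
split.
  rewrite /LGmax; apply: (@bmax_le R) => // i.
  apply: le_trans (_ : c1%:R^-1 * \sum_(C in G | i \in C) Lmax f <= _).
    apply: ler_wpM2l; first by rewrite invr_ge0 ler0n.
    by apply: ler_sum => C /andP[_ iC]; exact: (LC_le hf iC).
  by rewrite cnt -[Lmax f *+ c1]mulr_natr mulrCA mulVf ?mulr1.
move=> tau htau [_ htC].
have cardC : forall C, C \in G -> #|C| = tau by move=> C; rewrite inE; exact: htC.
have tau0 : tau%:R != 0 :> R by rewrite pnatr_eq0 -lt0n.
have [C0 hC0] : exists C, 0 < p C.
  case: (pselect (exists C, 0 < p C)) => // hne; exfalso.
  have : \sum_C p C = 0.
    apply: big1 => C _; apply/eqP; rewrite eq_le hp.1 andbT leNgt.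
    by apply/negP => h; apply: hne; exists C.
  by rewrite hp.2 => /eqP; rewrite oner_eq0.
have G0 : #|G|%:R != 0 :> R.
  rewrite pnatr_eq0; apply/eqP => /cards0_eq e.
  have : C0 \in G by rewrite inE.
  by rewrite e inE.
have KEY : #|G|%:R * tau%:R = n%:R * c1%:R :> R.
  have := @exch R n G (fun _ _ => (1 : R)).
  rewrite (eq_bigr (fun C => tau%:R)); last by move=> C hC; rewrite sumr_const cardC.
  rewrite sumr_const.
  under [RHS]eq_bigr do rewrite cnt.
  rewrite sumr_const card_ord => h.
  rewrite -[tau%:R *+ _]mulr_natr -[c1%:R *+ n]mulr_natr in h.
  by rewrite mulrC [n%:R * _]mulrC -h.
have hn : n%:R = #|G|%:R * tau%:R / c1%:R :> R by rewrite KEY mulfK.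
have hfx : forall x, favg f x = #|G|%:R^-1 * \sum_(C in G) fC f C x.
  move=> x; rewrite /favg /fC.
  under [in RHS]eq_bigr => C hC do rewrite cardC //.
  rewrite -mulr_sumr (@exch R n G).
  under [X in _ = _ * (_ * X)]eq_bigr => i _ do rewrite cnt.
  rewrite sumrMnl -mulr_natr hn; field.
  by rewrite G0 tau0 c10.
split; first exact: hfx.
split.
  rewrite /Lall.
  have -> : favg f = fun x => \sum_(C in G) #|G|%:R^-1 * fC f C x.
    by apply/funext => x; rewrite hfx mulr_sumr.
  rewrite mulr_sumr.
  have hw : forall C, C \in G -> 0 <= #|G|%:R^-1 :> R.
    by move=> C _; rewrite invr_ge0 ler0n.
  have hs : forall C, C \in G -> smooth_fun (fC f C).
    by move=> C _; exact: (fC_smooth hf C).1.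
  exact: (@comb_smooth R d _ (fun C => C \in G) (fun _ => #|G|%:R^-1) (fC f) hw hs).2.
have eq : #|G|%:R^-1 * \sum_(C in G) LC f C =
   n%:R^-1 * \sum_i (c1%:R^-1 * \sum_(C in G | i \in C) LC f C).
  rewrite -mulr_sumr -(@exch R n G).
  under [X in _ = _ * (_ * X)]eq_bigr => C hC do rewrite sumr_const cardC //.
  rewrite sumrMnl -mulr_natr hn; field.
  by rewrite G0 tau0 c10.
rewrite eq.
apply: le_trans (_ : n%:R^-1 * \sum_(i < n) LGmax f G c1 <= _).
  apply: ler_wpM2l; first by rewrite invr_ge0 ler0n.
  apply: ler_sum => i _; rewrite /LGmax.
  have := @bmax_ge R _ (index_enum _)
    (fun j : 'I_n => c1%:R^-1 * \sum_(C in G | j \in C) LC f C) 0 i (mem_index_enum _).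
  exact.
have n0 : n%:R != 0 :> R.
  rewrite hn; apply: mulf_neq0; [exact: mulf_neq0 | by rewrite invr_eq0].
rewrite sumr_const card_ord -[LGmax f G c1 *+ n]mulr_natr mulrCA mulVf ?mulr1 //.
Qed.
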